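(* Let $n\ge1$, $m=2n$, let $\delta_1,\delta_2>0$, and for $k,k'\in\{1,2\}$ let $\hat g_{k,k'}(u)=\int_{[0,\infty)}e^{-uz}\,dG_{k,k'}(z)$ be the Laplace transform of a probability distribution $G_{k,k'}$ on $[0,\infty)$. For $(v_1,\ldots,v_m)\in\mathbb{R}_+^m$ define functions $l_1,\ldots,l_m$ on $[0,\infty)$ by $l_1(t)=v_{2n}e^{-\delta_2 t}$, $l_2(t)=v_{2n-1}e^{-\delta_1 t}$, and for $k=1,\ldots,n-1$, $$l_{2k+1}(t)=v_{2(n-k)}e^{-\delta_2 t}+e^{-\delta_2 t}\int_0^t e^{\delta_2 s}\big[1-\hat g_{1,2}(l_{2k}(s))+1-\hat g_{2,2}(l_{2k-1}(s))\big]ds,$$ $$l_{2k+2}(t)=v_{2(n-k)-1}e^{-\delta_1 t}+e^{-\delta_1 t}\int_0^t e^{\delta_1 s}\big[1-\hat g_{1,1}(l_{2k}(s))+1-\hat g_{2,1}(l_{2k-1}(s))\big]ds.$$ Then for every $i=1,\ldots,m$ and every $(v_1,\ldots,v_m)\in\mathbb{R}_+^m$, $\lim_{t\to\infty}l_i(t)=0$.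
   Context: These functions are the (unique) solution of the forward ODE system $\dot l_1+\delta_2 l_1=0$, $\dot l_2+\delta_1 l_2=0$, $\dot l_{2k+1}+\delta_2 l_{2k+1}-(1-\hat g_{1,2}(l_{2k}))-(1-\hat g_{2,2}(l_{2k-1}))=0$, $\dot l_{2k+2}+\delta_1 l_{2k+2}-(1-\hat g_{1,1}(l_{2k}))-(1-\hat g_{2,1}(l_{2k-1}))=0$ with the stated initial values. *)

(* Defs.v *)
From HB Require Import structures.
From mathcomp Require Import all_boot all_order all_algebra.
From mathcomp Require Import all_classical all_reals all_analysis.
Set Implicit Arguments. Unset Strict Implicit. Unset Printing Implicit Defensive.
Import Order.TTheory GRing.Theory Num.Theory.
Local Open Scope classical_set_scope.
Local Open Scope ring_scope.

Definition laplace {R : realType} (G : probability R R) (u : R) : R :=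
  fine (\int[G]_(z in `[0%R, +oo[) (expR (- (u * z)))%:E)%E.

(* One step of the recursion: given (l_{2k-1}, l_{2k}), the pair
   (l_{2k+1}, l_{2k+2}) with initial values a (for l_{2k+1}) and b (for l_{2k+2}). *)
Definition lstep {R : realType} (d1 d2 : R) (G11 G12 G21 G22 : probability R R)
  (a b : R) (p : (R -> R) * (R -> R)) : (R -> R) * (R -> R) :=
  let lodd := p.1 in let leven := p.2 in
  (fun t => a * expR (- (d2 * t)) + expR (- (d2 * t)) *
     Rintegral (@lebesgue_measure R) `[0%R, t]
       (fun s => expR (d2 * s) *
          ((1 - laplace G12 (leven s)) + (1 - laplace G22 (lodd s)))),
   fun t => b * expR (- (d1 * t)) + expR (- (d1 * t)) *
     Rintegral (@lebesgue_measure R) `[0%R, t]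
       (fun s => expR (d1 * s) *
          ((1 - laplace G11 (leven s)) + (1 - laplace G21 (lodd s))))).

(* lpair k = (l_{2k+1}, l_{2k+2}); v is 1-indexed (v i = v_i, i = 1..2n). *)
Fixpoint lpair {R : realType} (n : nat) (d1 d2 : R) (G11 G12 G21 G22 : probability R R)
  (v : nat -> R) (k : nat) : (R -> R) * (R -> R) :=
  match k with
  | 0 => (fun t => v (2 * n)%N * expR (- (d2 * t)),
          fun t => v (2 * n - 1)%N * expR (- (d1 * t)))
  | k'.+1 => lstep d1 d2 G11 G12 G21 G22 (v (2 * (n - k))%N) (v (2 * (n - k) - 1)%N)
               (lpair n d1 d2 G11 G12 G21 G22 v k')
  end.

Definition lfun {R : realType} (n : nat) (d1 d2 : R) (G11 G12 G21 G22 : probability R R)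
  (v : nat -> R) (i : nat) : R -> R :=
  let p := lpair n d1 d2 G11 G12 G21 G22 v ((i.-1)./2) in
  if odd i then p.1 else p.2.

(* Main.v *)
Require Import Defs.
From HB Require Import structures.
From mathcomp Require Import all_boot all_order all_algebra.
From mathcomp Require Import all_classical all_reals all_analysis.
From mathcomp Require Import ring lra zify.
Import Order.TTheory GRing.Theory Num.Theory.
Import numFieldNormedType.Exports.
Local Open Scope classical_set_scope.
Local Open Scope ring_scope.
Lemma mono_int d (T : measurableType d) (R : realType) (mu : measure T R)
  (D : set T) (f1 f2 : T -> \bar R) :
  (forall x, D x -> 0 <= f1 x)%E -> (forall x, D x -> f1 x <= f2 x)%E ->
  (\int[mu]_(x in D) f1 x <= \int[mu]_(x in D) f2 x)%E.
Proof.
move=> f10 f12.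
have f20 : forall x, D x -> (0 <= f2 x)%E.
  by move=> x Dx; apply: le_trans (f10 _ Dx) (f12 _ Dx).
rewrite !(integral_mkcond D) !ge0_integralTE; last 2 first.
- exact: erestrict_ge0.
- exact: erestrict_ge0.
apply: ereal_sup_le => _ [h hf <-]; exists h => // x.
apply: le_trans (hf x) _; exact: lee_restrict.
Qed.

Lemma sub_int d (T : measurableType d) (R : realType) (mu : measure T R)
  (A B : set T) (f : T -> \bar R) :
  A `<=` B -> (forall x, B x -> 0 <= f x)%E ->
  (\int[mu]_(x in A) f x <= \int[mu]_(x in B) f x)%E.
Proof.
move=> AB f0; rewrite (integral_mkcond A) (integral_mkcond B).
apply: mono_int => x _; rewrite /patch.
- by case: ifPn => // /set_mem /AB /f0.
- case: ifPn => [/set_mem /[dup] Ax /AB Bx|_]; first by rewrite ifT //; exact/mem_set.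
  by case: ifPn => // /set_mem /f0.
Qed.

Section Lap.
Variable R : realType.
Variable G : probability R R.
Hypothesis G0 : G [set z : R | z < 0] = 0%E.

Let I u := (\int[G]_(z in `[0%R, +oo[) (expR (- (u * z)))%:E)%E.

Lemma I_bnd u : 0 <= u -> (0 <= I u)%E /\ (I u <= 1)%E.
Proof.
move=> u0; split.
  by apply: integral_ge0 => z _; rewrite lee_fin expR_ge0.
apply: (le_trans (_ : _ <= \int[G]_(z in `[0%R, +oo[) (cst 1%E z))%E).
  apply: mono_int => z; rewrite /= in_itv /= andbT => z0.
    by rewrite lee_fin expR_ge0.
  by rewrite lee_fin -expR0 ler_expR oppr_le0 mulr_ge0.
by rewrite integral_cst //= mul1e probability_le1.
Qed.

Lemma I_fin u : 0 <= u -> I u \is a fin_num.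
Proof.
move=> u0; have [I0 I1] := @I_bnd u u0.
by rewrite fin_num_abs gee0_abs // (le_lt_trans I1) // ltey.
Qed.

Lemma laplace_bnd u : 0 <= u -> 0 <= laplace G u <= 1.
Proof.
move=> u0; have [I0 I1] := @I_bnd u u0.
rewrite /laplace -/(I u) fine_ge0 //= -lee_fin fineK ?I1 //; exact: I_fin u0.
Qed.

Lemma G_pos : G `[0%R, +oo[%classic = 1%E.
Proof.
have eN : [set z : R | z < 0] = `]-oo, 0[%classic.
  by apply/seteqP; split => z; rewrite /= in_itv.
have eT : [set: R] = [set z : R | z < 0] `|` `[0%R, +oo[.
  apply/seteqP; split => z //= _; rewrite in_itv /= andbT.
  by case: (ltP z 0) => h; [left|right].
have := probability_setT G; rewrite eT measureU //.
- by move=> <-; rewrite [X in (X + _)%E](_ : _ = 0%E) ?add0e //; exact: G0.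
- by rewrite eN.
- rewrite eN; apply/seteqP; split => z //=; rewrite !in_itv /= andbT.
  by move=> [z0 z0']; move: (lt_le_trans z0 z0'); rewrite ltxx.
Qed.

Lemma laplace_near1 e : 0 < e -> e <= 1 ->
  exists2 eta, 0 < eta & forall u, 0 <= u -> u <= eta -> 1 - laplace G u <= e.
Proof.
move=> e0 e1.
pose F (n : nat) := `[0%R, n%:R]%classic : set R.
have bF : \bigcup_n F n = `[0%R, +oo[%classic.
  apply/seteqP; split => z /=.
    by move=> [n _]; rewrite /F /= !in_itv /= => /andP[-> _].
  rewrite in_itv /= andbT => z0; exists (Num.trunc z).+1 => //.
  by rewrite /F /= in_itv /= z0 /= ltW // truncnS_gt.
have hF : {homo F : n m / (n <= m)%N >-> (n <= m)%O}.
  move=> n m nm; rewrite subsetEset => z; rewrite /F /= !in_itv /= => /andP[-> zn].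
  by rewrite (le_trans zn) // ler_nat.
have H : (G \o F) x @[x --> \oo] --> (1%E : \bar R).
  have <- : G (\bigcup_n F n) = 1%E by rewrite bF; exact: G_pos.
  apply: (@nondecreasing_cvg_mu _ _ _ G F) => //.
  - by move=> i; rewrite /F.
  - by apply: bigcupT_measurable => i; rewrite /F.
move: H => /fine_cvgP [_ /cvgrPdist_lt /(_ (e / 2)) ].
have e20 : 0 < e / 2 by rewrite divr_gt0.
move=> /(_ e20) [N _ /(_ N (leqnn N)) /= HN].
pose p := fine (G (F N)).
have Gfin : G (F N) = p%:E.
  rewrite /p fineK // ge0_fin_numE // (le_lt_trans (probability_le1 _ _)) ?ltey //.
  by rewrite /F.
have hp : 1 - e / 2 <= p.
  move: HN; rewrite -/p => /ltr_normlP [_ h]; lra.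
have p1 : p <= 1.
  by rewrite -lee_fin -Gfin probability_le1 // /F.
have N1 : 0 < N%:R + 1 :> R by rewrite ltr_wpDl // ler0n.
exists (e / 2 / (N%:R + 1)); first by rewrite divr_gt0.
move=> u u0 ueta.
have key : (((1 - e/2) * p)%:E <= I u)%E.
  apply: (@le_trans _ _ (\int[G]_(z in F N) (cst (1 - e/2)%:E z))%E).
    rewrite integral_cst; last by rewrite /F.
    rewrite le_eqVlt; apply/orP; left; apply/eqP; rewrite EFinM; congr (_ * _)%E; exact/esym/Gfin.
  apply: (@le_trans _ _ (\int[G]_(z in F N) (expR (- (u * z)))%:E)%E).
    apply: mono_int => z; rewrite /F/= in_itv/= => /andP[z0 zN].
      rewrite /= lee_fin; lra.
    rewrite /= lee_fin; apply: le_trans (expR_ge1Dx _).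
    have h1 : u * z <= e / 2 / (N%:R + 1) * N%:R by apply: ler_pM.
    have h2 : e / 2 / (N%:R + 1) * N%:R <= e / 2.
      rewrite mulrAC ler_pdivrMr // ler_pM2l // lerDl //.
    lra.
  apply: sub_int => z; rewrite /F/= !in_itv/= ?andbT; first by case/andP.
  by move=> _; rewrite lee_fin expR_ge0.
have [I0 I1] := @I_bnd u u0.
have : (1 - e/2) * p <= laplace G u.
  by rewrite /laplace -/(I u) -lee_fin fineK // (@I_fin u u0).
nra.
Qed.
End Lap.

Section FTC.
Variable R : realType.
Notation mu := (@lebesgue_measure R).

Lemma dexp (d x : R) : is_derive x 1 (fun y => expR (d * y)) (expR (d * x) * d).
Proof.
have h1 : is_derive x 1 (fun y : R => d * y) d.
  have := @is_deriveZ R R R id d x 1 1 (is_derive_id x 1).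
  by rewrite /GRing.scale /= mulr1.
exact: (@is_derive1_comp R expR (fun y => d * y) x (expR (d * x)) d (is_derive_expR _) h1).
Qed.

Lemma ftc_exp (c K d t : R) : 0 < d -> 0 < t ->
  (\int[mu]_(x in `[0%R, t]) (c * expR (d * x) + K)%:E =
   (c / d * expR (d * t) + K * t)%:E - (c / d * expR (d * 0) + K * 0)%:E)%E.
Proof.
move=> d0 t0.
pose F := fun x : R => c / d * expR (d * x) + K * x.
have dF : forall x : R, is_derive x 1 F (c * expR (d * x) + K).
  move=> x.
  have H1 := is_deriveZ (c/d) (dexp d x).
  have H2 := is_deriveZ K (is_derive_id x (1:R)).
  have := is_deriveD H1 H2.
  move=> H; apply: (is_derive_eq H).
  rewrite /GRing.scale /= mulr1; field; exact: lt0r_neq0.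
have cF : forall x : R, F z @[z --> x] --> F x.
  move=> x; apply/differentiable_continuous/derivable1_diffP.
  by case: (dF x).
have cf : continuous (fun x : R => c * expR (d * x) + K).
  move=> x; apply/differentiable_continuous/derivable1_diffP.
  have H1 := is_deriveZ c (dexp d x).
  have H2 := is_derive_cst K x (1:R).
  by case: (is_deriveD H1 H2).
apply: (@continuous_FTC2 R _ F 0 t t0).
- exact: continuous_subspaceT.
- split.
  + by move=> x _; case: (dF x).
  + exact/cvg_at_right_filter/cF.
  + exact/cvg_at_left_filter/cF.
- by move=> x _; rewrite derive1E derive_val.
Qed.

Definition Good (f : R -> R) := (forall t, 0 <= f t) /\
  (forall e, 0 < e -> exists T, forall t, T <= t -> f t <= e).

Lemma exp_small (d : R) : 0 < d -> forall e, 0 < e ->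
  exists T, forall t, T <= t -> expR (- (d * t)) <= e.
Proof.
move=> d0 e e0; exists (d * e)^-1 => t Tt.
have h : 1 <= (d * e) * t.
  by rewrite -ler_pdivrMl ?mulr_gt0 // mulr1.
rewrite expRN -[e]invrK lef_pV2 ?posrE ?expR_gt0 ?invr_gt0 //.
apply: le_trans (expR_ge1Dx _).
rewrite -(ler_pM2l e0) mulfV ?gt_eqF //; nra.
Qed.

Lemma texp_small (d : R) : 0 < d -> forall e, 0 < e ->
  exists T, forall t, T <= t -> t * expR (- (d * t)) <= e.
Proof.
move=> d0 e e0; exists (4 / (e * d * d)) => t Tt.
have h : 4 <= (e * d * d) * t.
  by rewrite -ler_pdivrMl ?mulr_gt0 // mulrC.
have t0 : 0 <= t.
  by apply: le_trans Tt; rewrite divr_ge0 // ?mulr_ge0 // ltW.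
have eE : expR (d * t) = expR (d * t / 2) * expR (d * t / 2).
  by rewrite -expRD -splitr.
have h1 := expR_ge1Dx (d * t / 2).
have h2 : 0 <= 1 + d * t / 2 by rewrite addr_ge0 // divr_ge0 // mulr_ge0 // ltW.
have h3 : (1 + d * t / 2) * (1 + d * t / 2) <= expR (d * t).
  by rewrite eE ler_pM.
rewrite expRN ler_pdivrMr ?expR_gt0 //.
apply: le_trans (_ : e * ((1 + d * t / 2) * (1 + d * t / 2)) <= _); last first.
  by rewrite ler_pM2l.
nra.
Qed.

Lemma Rint_le (D : set R) (f : R -> R) (X : R) : (forall x, D x -> 0 <= f x) ->
  (\int[mu]_(x in D) (f x)%:E <= X%:E)%E -> Rintegral mu D f <= X.
Proof.
move=> f0 hX.
have I0 : (0 <= \int[mu]_(x in D) (f x)%:E)%E.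
  by apply: integral_ge0 => x Dx; rewrite lee_fin f0.
rewrite /Rintegral -lee_fin fineK //.
by rewrite fin_num_abs gee0_abs // (le_lt_trans hX) // ltry.
Qed.

Lemma conv (d a B : R) (h : R -> R) : 0 < d -> 0 <= a ->
  (forall s, 0 <= h s <= B) ->
  (forall e, 0 < e -> exists T, forall s, T <= s -> h s <= e) ->
  Good (fun t => a * expR (- (d * t)) + expR (- (d * t)) *
     Rintegral mu `[0%R, t] (fun s => expR (d * s) * h s)).
Proof.
move=> d0 a0 hB hlim.
have hint0 t : 0 <= Rintegral mu `[0%R, t] (fun s => expR (d * s) * h s).
  by apply: Rintegral_ge0 => s _; rewrite mulr_ge0 ?expR_ge0 // (andP (hB s)).1.
split.
  by move=> t; rewrite addr_ge0 // mulr_ge0 // expR_ge0.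
move=> e e0.
have B0 : 0 <= B := le_trans (andP (hB 0)).1 (andP (hB 0)).2.
pose e3 := e / 3.
have e30 : 0 < e3 by rewrite divr_gt0.
have [T1 HT1] := hlim (d * e3) (mulr_gt0 d0 e30).
pose T0 := Num.max T1 0.
pose K := B * expR (d * T0).
have K0 : 0 <= K by rewrite mulr_ge0 // expR_ge0.
have [T2 HT2] := @texp_small d d0 _ (divr_gt0 e30 (ltr_wpDl K0 ltr01)).
have [T3 HT3] := @exp_small d d0 _ (divr_gt0 e30 (ltr_wpDl a0 ltr01)).
exists (Num.max T0 (Num.max T2 T3) + 1) => t Tt.
have Tt' : Num.max T0 (Num.max T2 T3) <= t - 1 by rewrite lerBrDr.
move: Tt'; rewrite !ge_max => /and3P[T0t T2t T3t].
have T00 : 0 <= T0 by rewrite le_max lexx orbT.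
have T10 : T1 <= T0 by rewrite le_max lexx.
have t0 : 0 < t by lra.
pose E := expR (- (d * t)).
pose Y := expR (d * t).
have EY : E * Y = 1 by rewrite /E /Y expRN mulVf // gt_eqF // expR_gt0.
have E0 : 0 <= E by rewrite expR_ge0.
have hA : a * E <= e3.
  apply: (@le_trans _ _ (a * (e3 / (a + 1)))).
    by rewrite ler_wpM2l //; apply: HT3; lra.
  rewrite mulrA ler_pdivrMr ?ltr_wpDl //; nra.
have hK : K * (t * E) <= e3.
  apply: (@le_trans _ _ (K * (e3 / (K + 1)))).
    by rewrite ler_wpM2l //; apply: HT2; lra.
  rewrite mulrA ler_pdivrMr ?ltr_wpDl //; nra.
have hR : Rintegral mu `[0%R, t] (fun s => expR (d * s) * h s) <= e3 * Y + K * t.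
  apply: (@le_trans _ _ ((d * e3) / d * expR (d * t) + K * t - ((d * e3) / d * expR (d * 0) + K * 0))).
    apply: Rint_le.
      by move=> s _; rewrite mulr_ge0 ?expR_ge0 // (andP (hB s)).1.
    rewrite EFinB -ftc_exp //.
    apply: mono_int => s; rewrite /= in_itv /= => /andP[s0 st].
      by rewrite lee_fin mulr_ge0 ?expR_ge0 // (andP (hB s)).1.
    rewrite lee_fin.
    have [sT|sT] := leP T1 s.
      have := HT1 s sT => hs.
      have : expR (d * s) * h s <= expR (d * s) * (d * e3) by rewrite ler_wpM2l ?expR_ge0.
      lra.
    have hs1 : h s <= B := (andP (hB s)).2.
    have hs0 : 0 <= h s := (andP (hB s)).1.
    have es : expR (d * s) <= expR (d * T0).
      by rewrite ler_expR ler_pM2l //; apply: ltW; apply: lt_le_trans T10.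
    have : expR (d * s) * h s <= expR (d * T0) * B by rewrite ler_pM ?expR_ge0.
    have : 0 <= d * e3 * expR (d * s) by rewrite mulr_ge0 ?expR_ge0 // mulr_ge0 // ltW.
    rewrite /K; lra.
  have hd : d * e3 / d = e3 by rewrite mulrAC divff ?mul1r // gt_eqF.
  rewrite hd !mulr0 expR0 mulr1 addr0 -/Y; lra.
rewrite -/E.
have := ler_wpM2l E0 hR.
have -> : E * (e3 * Y + K * t) = e3 + K * (t * E).
  by rewrite mulrDr mulrCA EY mulr1 mulrCA (mulrC E t).
have he : e3 + e3 + e3 = e by rewrite /e3; field.
move: hA hK; rewrite -/E => hA hK.
lra.
Qed.

End FTC.
Arguments Good {R}.

Section Main.
Variable R : realType.

Lemma good_exp (a d : R) : 0 <= a -> 0 < d -> Good (fun t => a * expR (- (d * t))).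
Proof.
move=> a0 d0; split => [t|e e0]; first by rewrite mulr_ge0 // expR_ge0.
have [T HT] := @exp_small R d d0 (e / (a + 1)) (divr_gt0 e0 (ltr_wpDl a0 ltr01)).
exists T => t Tt.
apply: (@le_trans _ _ (a * (e / (a + 1)))); first by rewrite ler_wpM2l // HT.
rewrite mulrA ler_pdivrMr ?ltr_wpDl //; nra.
Qed.

Lemma h_good (Ga Gb : probability R R) (f g : R -> R) :
  Ga [set z : R | z < 0] = 0%E -> Gb [set z : R | z < 0] = 0%E ->
  Good f -> Good g ->
  (forall s, 0 <= (1 - laplace Ga (f s)) + (1 - laplace Gb (g s)) <= 2) /\
  (forall e, 0 < e -> exists T, forall s, T <= s ->
     (1 - laplace Ga (f s)) + (1 - laplace Gb (g s)) <= e).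
Proof.
move=> Ga0 Gb0 [f0 fl] [g0 gl]; split.
  move=> s; have /andP[a0 a1] := @laplace_bnd R Ga (f s) (f0 s).
  have /andP[b0 b1] := @laplace_bnd R Gb (g s) (g0 s).
  apply/andP; split; lra.
move=> e e0.
pose e' := Num.min (e / 2) 1.
have e'0 : 0 < e' by rewrite lt_min ltr01 divr_gt0.
have e'1 : e' <= 1 by rewrite ge_min lexx orbT.
have e'2 : e' <= e / 2 by rewrite ge_min lexx.
have [ea ea0 Ha] := @laplace_near1 R Ga Ga0 e' e'0 e'1.
have [eb eb0 Hb] := @laplace_near1 R Gb Gb0 e' e'0 e'1.
have [T1 HT1] := fl ea ea0.
have [T2 HT2] := gl eb eb0.
exists (Num.max T1 T2) => s; rewrite ge_max => /andP[T1s T2s].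
have := Ha (f s) (f0 s) (HT1 s T1s).
have := Hb (g s) (g0 s) (HT2 s T2s).
lra.
Qed.

Variables (n : nat) (d1 d2 : R) (G11 G12 G21 G22 : probability R R).
Hypotheses (n1 : (1 <= n)%N) (d10 : 0 < d1) (d20 : 0 < d2).
Hypotheses (H11 : G11 [set z : R | z < 0] = 0%E) (H12 : G12 [set z : R | z < 0] = 0%E).
Hypotheses (H21 : G21 [set z : R | z < 0] = 0%E) (H22 : G22 [set z : R | z < 0] = 0%E).
Variable v : nat -> R.
Hypothesis v0 : forall j, (1 <= j <= 2 * n)%N -> 0 <= v j.

Lemma step_good (a b : R) (p : (R -> R) * (R -> R)) : 0 <= a -> 0 <= b ->
  Good p.1 -> Good p.2 ->
  Good (lstep d1 d2 G11 G12 G21 G22 a b p).1 /\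
  Good (lstep d1 d2 G11 G12 G21 G22 a b p).2.
Proof.
move=> a0 b0 g1 g2; split.
  have [hb hl] := @h_good G12 G22 p.2 p.1 H12 H22 g2 g1.
  exact: (@conv R d2 a 2 (fun s => (1 - laplace G12 (p.2 s)) + (1 - laplace G22 (p.1 s)))
    d20 a0 hb hl).
have [hb hl] := @h_good G11 G21 p.2 p.1 H11 H21 g2 g1.
exact: (@conv R d1 b 2 (fun s => (1 - laplace G11 (p.2 s)) + (1 - laplace G21 (p.1 s)))
  d10 b0 hb hl).
Qed.

Lemma lpair_good k : (k < n)%N ->
  Good (lpair n d1 d2 G11 G12 G21 G22 v k).1 /\
  Good (lpair n d1 d2 G11 G12 G21 G22 v k).2.
Proof.
elim: k => [|k IH] kn.
  split; apply: good_exp => //; apply: v0; apply/andP; split; lia.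
have [g1 g2] := IH (ltnW kn).
apply: step_good => //; apply: v0; apply/andP; split; lia.
Qed.
End Main.

Lemma good_cvg (R : realType) (f : R -> R) : Good f -> f t @[t --> +oo] --> 0.
Proof.
move=> [f0 fl]; apply/cvgrPdist_le => e e0.
have [T HT] := fl e e0.
exists T; split; first exact: num_real.
move=> t Tt; rewrite sub0r normrN ger0_norm //; apply: HT; exact: ltW.
Qed.

Theorem mainTheorem1 (R : realType) (n : nat) (d1 d2 : R)
  (G11 G12 G21 G22 : probability R R) :
  (1 <= n)%N -> 0 < d1 -> 0 < d2 ->
  G11 [set z : R | z < 0] = 0%E -> G12 [set z : R | z < 0] = 0%E ->
  G21 [set z : R | z < 0] = 0%E -> G22 [set z : R | z < 0] = 0%E ->
  forall (v : nat -> R), (forall j, (1 <= j <= 2 * n)%N -> 0 <= v j) ->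
  forall i, (1 <= i <= 2 * n)%N ->
    lfun n d1 d2 G11 G12 G21 G22 v i t @[t --> +oo] --> 0.
Proof.
move=> n1 d10 d20 H11 H12 H21 H22 v v0 i /andP[i1 i2].
have kn : ((i.-1)./2 < n)%N.
  rewrite ltn_half_double -muln2; lia.
have [g1 g2] := @lpair_good R n d1 d2 G11 G12 G21 G22 n1 d10 d20 H11 H12 H21 H22 v v0 _ kn.
rewrite /lfun; case: ifP => _; exact: good_cvg.
Qed.
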